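(* For every positive integer $d$ there is a constant $C_d$ such that for every positive integer $n$, every subposet of the $\mathbf{n^{d+1}}$-grid whose dimension is at most $d$ has at most $C_d n^d$ elements.
   Context: $[n]$ denotes $\{0,1,\ldots,n-1\}$. The $\mathbf{n^{k}}$-grid is the poset on $[n]^{k}$ with the product order: $(x_1,\ldots,x_k)\le(y_1,\ldots,y_k)$ iff $x_i\le y_i$ for all $i$. A subposet is a subset with the induced order. The dimension of a poset $P$ is the least integer $d$ such that there are $d$ linear extensions of $P$ whose intersection is $P$. *)

(* Defs.v *)
From mathcomp Require Import all_boot.
Set Implicit Arguments. Unset Strict Implicit. Unset Printing Implicit Defensive.

Definition gridpt (k n : nat) := {ffun 'I_k -> 'I_n}.

Definition grid_le (k n : nat) (x y : gridpt k n) : bool :=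
  [forall i, (x i <= y i)%N].

Definition linear_extension (k n : nat) (S : {set gridpt k n})
    (L : rel (gridpt k n)) : Prop :=
  [/\ (forall x, x \in S -> L x x),
      (forall x y, x \in S -> y \in S -> L x y -> L y x -> x = y),
      (forall x y z, x \in S -> y \in S -> z \in S -> L x y -> L y z -> L x z),
      (forall x y, x \in S -> y \in S -> L x y || L y x)
    & (forall x y, x \in S -> y \in S -> grid_le x y -> L x y)].

Definition dim_le (k n : nat) (S : {set gridpt k n}) (d : nat) : Prop :=
  exists d' : nat, (d' <= d)%N /\
  exists Ls : 'I_d' -> rel (gridpt k n),
    (forall j, linear_extension S (Ls j)) /\
    (forall x y, x \in S -> y \in S ->
       (grid_le x y <-> forall j, Ls j x y)).

(* Main.v *)
Require Import Defs.
From mathcomp Require Import all_boot zify.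
Set Implicit Arguments. Unset Strict Implicit. Unset Printing Implicit Defensive.

Lemma inc_enum n m (V : {set 'I_n}) : m <= #|V| ->
  exists K : 'I_m -> 'I_n, (forall j j' : 'I_m, j < j' -> K j < K j') /\
                          (forall j, K j \in V).
Proof.
elim: m V => [|m IH] V hV.
  have K0 : 'I_0 -> 'I_n by move=> [j Hj]; exfalso; by rewrite ltn0 in Hj.
  by exists K0; split=> [[]|[]].
have [x0 Hx0] : exists x0, x0 \in V.
  apply/set0Pn; rewrite -card_gt0; exact: leq_trans hV.
case: (arg_minnP val Hx0) => v Hv Hmin.
have Hv' : v \in V := Hv.
have hV' : m <= #|V :\ v| by move: hV; rewrite (cardsD1 v V) Hv' add1n ltnS.
have [K' [K'inc K'in]] := IH _ hV'.
pose K (j : 'I_m.+1) : 'I_n := if unlift ord0 j is Some j' then K' j' else v.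
have KS : forall j', K (lift ord0 j') = K' j' by move=> j'; rewrite /K liftK.
have K0 : K ord0 = v by rewrite /K unlift_none.
exists K; split.
  move=> j j'; case: (unliftP ord0 j) => [a|] ->; case: (unliftP ord0 j') => [b|] ->;
    rewrite ?KS ?K0 ?lift0 ?ltnS //; first exact: K'inc.
  move=> _; have := K'in b; rewrite in_setD1 => /andP[hne hin].
  have := Hmin _ hin; rewrite leq_eqVlt => /orP[/eqP|//] e.
  by move: hne; rewrite -(inj_eq val_inj) -e eqxx.
move=> j; case: (unliftP ord0 j) => [a|] ->; rewrite ?KS ?K0 //.
by have := K'in a; rewrite in_setD1 => /andP[].
Qed.

Definition contains D N m (S : {set gridpt D N}) (s : 'I_D -> 'I_m -> 'I_m) : Prop :=
  exists phi : 'I_m -> gridpt D N, (forall j, phi j \in S) /\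
    forall i j j', s i j < s i j' -> phi j i < phi j' i.

Definition KMbound D m (s : 'I_D -> 'I_m -> 'I_m) (A : nat) : Prop :=
  forall N (S : {set gridpt D N}), ~ contains S s -> #|S| <= A * N ^ D.-1.

Lemma KM_base m (s : 'I_1 -> 'I_m -> 'I_m) : KMbound s m.
Proof.
move=> N S hS; rewrite expn0 muln1 leqNgt; apply/negP => hlt; apply: hS.
pose V := [set (x : gridpt 1 N) ord0 | x in S].
have cV : #|V| = #|S|.
  apply: card_in_imset => x y _ _ e; apply/ffunP => i; by rewrite (ord1 i).
have [K [Kinc KV]] := inc_enum (ltnW (leq_trans hlt (eq_leq (esym cV)))).
have : forall j, exists x, (x \in S) /\ x ord0 = K (s ord0 j).
  move=> j; have /imsetP[x xS ex] := KV (s ord0 j); by exists x.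
case/fin_all_exists => phi hphi; exists phi; split; first by move=> j; case: (hphi j).
move=> i j j'; rewrite (ord1 i) => hs.
by case: (hphi j) => _ ->; case: (hphi j') => _ ->; apply: Kinc.
Qed.

Lemma card_sum_cond (T : finType) (A : {set T}) (Q : pred T) :
  \sum_(x in A) (Q x : nat) = #|[set x in A | Q x]|.
Proof.
rewrite -sum1_card [RHS](eq_bigl (fun x => (x \in A) && Q x)); last by move=> x; rewrite inE.
by rewrite big_mkcondr; apply: eq_bigr => x _; case: (Q x).
Qed.

Lemma card_exists_le (T I : finType) (A : {set T}) (P : I -> T -> bool) :
  #|[set x in A | [exists i, P i x]]| <= \sum_i #|[set x in A | P i x]|.
Proof.
rewrite -card_sum_cond.
rewrite (eq_bigr (fun i => \sum_(x in A) (P i x : nat))); last by move=> i _; rewrite card_sum_cond.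
rewrite exchange_big /=; apply: leq_sum => x _.
case: existsP => // -[i Hi].
by rewrite (bigD1 i) //= Hi.
Qed.

Section Step.
Variables (d m bb M : nat).
Local Notation D := d.+1.
Local Notation b := bb.+1.
Variable s : 'I_D -> 'I_m -> 'I_m.

Lemma blk_lt (k : 'I_(b * M)) : k %/ b < M.
Proof. rewrite ltn_divLR //; have := ltn_ord k; by rewrite [in X in _ < X -> _]mulnC. Qed.

Definition blk (x : gridpt D (b * M)) : gridpt D M :=
  [ffun i => Ordinal (blk_lt (x i))].
Definition md (x : gridpt D (b * M)) : {ffun 'I_D -> 'I_b} :=
  [ffun i => Ordinal (ltn_pmod (x i) (ltn0Sn bb))].

Lemma decomp (x : gridpt D (b * M)) i : (x i : nat) = blk x i * b + md x i.
Proof. by rewrite !ffunE /= -divn_eq. Qed.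

Lemma lt_blk (x y : gridpt D (b * M)) i : blk x i < blk y i -> x i < y i.
Proof. rewrite !ffunE /=; apply: contraTT; rewrite -!leqNgt; exact: leq_div2r. Qed.

Lemma lt_md (x y : gridpt D (b * M)) i : blk x i = blk y i -> md x i < md y i -> x i < y i.
Proof. by move=> e h; rewrite (decomp x) (decomp y) e ltn_add2l. Qed.

Lemma blk_md_inj (x y : gridpt D (b * M)) : blk x = blk y -> md x = md y -> x = y.
Proof.
move=> e1 e2; apply/ffunP => i; apply: val_inj.
by rewrite /= (decomp x) (decomp y) e1 e2.
Qed.

Lemma contract_avoid (S : {set gridpt D (b * M)}) : ~ contains S s -> ~ contains (blk @: S) s.
Proof.
move=> hS [phi [hin hmono]]; apply: hS.
have : forall j, exists x, (x \in S) /\ blk x = phi j.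
  by move=> j; case/imsetP: (hin j) => x xS e; exists x.
case/fin_all_exists => psi hpsi; exists psi; split; first by move=> j; case: (hpsi j).
move=> i j j' h; apply: lt_blk.
by case: (hpsi j) => _ ->; case: (hpsi j') => _ ->; exact: hmono.
Qed.

Definition fib (S : {set gridpt D (b * M)}) (be : gridpt D M) := [set x in S | blk x == be].
Definition wideK (S : {set gridpt D (b * M)}) (i : 'I_D) (K : {ffun 'I_m -> 'I_b}) be :=
  [forall j, [exists x in S, (blk x == be) && (md x i == K j)]].
Definition incK (K : {ffun 'I_m -> 'I_b}) :=
  [forall j : 'I_m, [forall j' : 'I_m, (j < j') ==> (K j < K j')]].
Definition wide (S : {set gridpt D (b * M)}) (i : 'I_D) be := [exists K, incK K && wideK S i K be].

Lemma md_inj_fib (S : {set gridpt D (b * M)}) be : {in fib S be &, injective md}.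
Proof.
move=> x y; rewrite !inE => /andP[_ /eqP ex] /andP[_ /eqP ey] e.
by apply: blk_md_inj => //; rewrite ex ey.
Qed.

Lemma nonwide_card (S : {set gridpt D (b * M)}) be : (forall i, ~~ wide S i be) -> #|fib S be| <= (D * m.-1) ^ D.
Proof.
move=> H.
pose Vi i := [set v | [exists x in fib S be, md x i == v]].
have hVi : forall i, #|Vi i| <= m.-1.
  move=> i; rewrite leqNgt; apply/negP => h.
  have hm : m <= #|Vi i| by apply: leq_trans h; rewrite -ltnS; case: m.
  have [K [Kinc KV]] := inc_enum hm.
  apply: (negP (H i)); apply/existsP; exists [ffun j => K j]; apply/andP; split.
    apply/forallP => j; apply/forallP => j'; apply/implyP => hj; rewrite !ffunE; exact: Kinc.
  apply/forallP => j; have := KV j; rewrite inE => /existsP [x /andP [xF /eqP e]].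
  apply/existsP; exists x; have -> : [ffun j0 => K j0] j = K j by rewrite ffunE.
  rewrite -e eqxx andbT.
  by move: xF; rewrite inE.
pose V := [set v | [exists i, v \in Vi i]].
have cV : #|V| <= D * m.-1.
  have := card_exists_le setT (fun i v => v \in Vi i).
  have -> : [set x in setT | [exists i, x \in Vi i]] = V.
    by apply/setP => v; rewrite !inE.
  move/leq_trans; apply.
  have -> : D * m.-1 = \sum_(i < D) m.-1 by rewrite big_const_ord iter_addn_0 mulnC.
  apply: leq_sum => i _.
  by rewrite (eq_card (B := Vi i)) ?hVi // => v; rewrite !inE.
rewrite -(card_in_imset (md_inj_fib (S := S) (be := be))).
have sub : [set md x | x in fib S be] \subset ffun_on (mem V).
  apply/subsetP => g /imsetP[x xF ->]; apply/ffun_onP => i.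
  rewrite inE; apply/existsP; exists i; rewrite inE; apply/existsP; exists x.
  by rewrite xF eqxx.
apply: leq_trans (subset_leq_card sub) _.
by rewrite card_ffun_on card_ord leq_exp2r.
Qed.

Definition proj (i : 'I_D) (be : gridpt D M) : gridpt d M := [ffun l => be (lift i l)].

Lemma wide_count (S : {set gridpt D (b * M)}) (i : 'I_D) (Aprj : nat) :
  KMbound (fun l => s (lift i l)) Aprj -> ~ contains S s ->
  #|[set be in blk @: S | wide S i be]| <= M * (b ^ m * (Aprj * M ^ d.-1)).
Proof.
move=> hprj hS.
pose T (cK : 'I_M * {ffun 'I_m -> 'I_b}) :=
  [set be in blk @: S | (be i == cK.1) && incK cK.2 && wideK S i cK.2 be].
have h1 : #|[set be in blk @: S | wide S i be]| <= \sum_cK #|T cK|.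
  apply: leq_trans (card_exists_le (blk @: S) (fun (cK : _ * {ffun _ -> _}) be => (be i == cK.1) && incK cK.2 && wideK S i cK.2 be)).
  apply: subset_leq_card; apply/subsetP => be; rewrite !inE => /andP[-> /existsP[K hK]] /=.
  by apply/existsP; exists (be i, K); rewrite /= eqxx.
apply: (leq_trans h1).
have h2 : forall cK, #|T cK| <= Aprj * M ^ d.-1.
  case=> c K.
  pose W := [set proj i be | be in T (c, K)].
  have cW : #|W| = #|T (c, K)|.
    apply: card_in_imset => x y; rewrite !inE /= => /andP[_ /andP[/andP[/eqP xi _] _]]
      /andP[_ /andP[/andP[/eqP yi _] _]] e.
    apply/ffunP => k; case: (unliftP i k) => [l|] ->; last by rewrite xi yi.
    by have := congr1 (fun f : gridpt d M => f l) e; rewrite !ffunE.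
  rewrite -cW; apply: hprj => -[phi [hin hmono]]; apply: hS.
  have : forall j, exists x, [/\ x \in S, blk x i = c,
       (forall l, blk x (lift i l) = phi j l), md x i = K (s i j) & incK K].
    move=> j; case/imsetP: (hin j) => be; rewrite inE /= => /andP[_ /andP[/andP[/eqP bi iK] /forallP wK]] ->.
    have /existsP [x /andP [xS /andP[/eqP bx /eqP mx]]] := wK (s i j).
    by exists x; split; rewrite ?bx // => l; rewrite ffunE.
  case/fin_all_exists => psi hpsi; exists psi; split; first by move=> j; case: (hpsi j).
  move=> k j j' hs; case: (unliftP i k) => [l|] e; rewrite e in hs *.
    apply: lt_blk; case: (hpsi j) => _ _ -> _ _; case: (hpsi j') => _ _ -> _ _.
    exact: hmono.
  case: (hpsi j) => _ c1 _ m1 iK; case: (hpsi j') => _ c2 _ m2 _.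
  apply: lt_md; first by rewrite c1 c2.
  rewrite m1 m2; move/forallP: iK => /(_ (s i j)) /forallP /(_ (s i j')) /implyP; exact.
have -> : M * (b ^ m * (Aprj * M ^ d.-1)) =
   \sum_(cK : 'I_M * {ffun 'I_m -> 'I_b}) (Aprj * M ^ d.-1).
  by rewrite sum_nat_const card_prod card_ffun !card_ord mulnA.
by apply: leq_sum => cK _; exact: h2.
Qed.

Lemma step_bound (S : {set gridpt D (b * M)}) A Aprj :
  (forall i, KMbound (fun l => s (lift i l)) Aprj) ->
  (forall S' : {set gridpt D M}, ~ contains S' s -> #|S'| <= A * M ^ d) ->
  ~ contains S s ->
  #|S| <= (D * m.-1) ^ D * (A * M ^ d) + b ^ D * (D * (M * (b ^ m * (Aprj * M ^ d.-1)))).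
Proof.
move=> hprj hM hS.
set S' := blk @: S.
have e1 : #|S| = \sum_(be in S') #|fib S be|.
  rewrite -sum1_card (partition_big blk (mem S')) /=; last by move=> x xS; apply: imset_f.
  apply: eq_bigr => be _; rewrite -sum1_card; apply: eq_bigl => x; by rewrite !inE.
rewrite e1.
have e2 : forall be, #|fib S be| <= (D * m.-1) ^ D + b ^ D * [exists i, wide S i be].
  move=> be; case: (boolP [exists i, wide S i be]) => h.
    rewrite muln1; apply: leq_trans (leq_addl _ _).
    rewrite -(card_in_imset (md_inj_fib (S := S) (be := be))).
    by apply: leq_trans (max_card _) _; rewrite card_ffun !card_ord.
  rewrite muln0 addn0; apply: nonwide_card => i; apply/negP => hw.
  by move/negP: h; apply; apply/existsP; exists i.
apply: (@leq_trans (\sum_(be in S') ((D * m.-1) ^ D + b ^ D * [exists i, wide S i be]))).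
  by apply: leq_sum => be _; exact: e2.
rewrite big_split /= sum_nat_const -big_distrr /= card_sum_cond.
apply: leq_add.
  by rewrite mulnC; apply: leq_mul => //; apply: hM; exact: contract_avoid.
apply: leq_mul => //.
apply: leq_trans (card_exists_le _ _) _.
have -> : D * (M * (b ^ m * (Aprj * M ^ d.-1))) =
   \sum_(i < D) (M * (b ^ m * (Aprj * M ^ d.-1))).
  by rewrite big_const_ord iter_addn_0 mulnC.
by apply: leq_sum => i _; exact: wide_count.
Qed.

End Step.

Lemma KMbound_mono D m (s : 'I_D -> 'I_m -> 'I_m) A A' :
  A <= A' -> KMbound s A -> KMbound s A'.
Proof. by move=> hA h N S hS; apply: leq_trans (h N S hS) _; rewrite leq_mul2r hA orbT. Qed.

Lemma embed_bound D m (s : 'I_D -> 'I_m -> 'I_m) B N N' : N <= N' ->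
  (forall S : {set gridpt D N'}, ~ contains S s -> #|S| <= B) ->
  forall S : {set gridpt D N}, ~ contains S s -> #|S| <= B.
Proof.
move=> hN h S hS.
pose w (x : gridpt D N) : gridpt D N' := [ffun i => widen_ord hN (x i)].
have winj : injective w.
  move=> x y e; apply/ffunP => i; apply: val_inj.
  by have := congr1 (fun f : gridpt D N' => val (f i)) e; rewrite !ffunE.
rewrite -(card_imset _ winj); apply: h => -[phi [hin hmono]]; apply: hS.
have : forall j, exists x, (x \in S) /\ w x = phi j.
  by move=> j; case/imsetP: (hin j) => x xS e; exists x.
case/fin_all_exists => psi hpsi; exists psi; split; first by move=> j; case: (hpsi j).
move=> i j j' h; have := hmono i j j' h.
by case: (hpsi j) => _ <-; case: (hpsi j') => _ <-; rewrite !ffunE.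
Qed.

Theorem KM D : 0 < D -> forall m (s : 'I_D -> 'I_m -> 'I_m), exists A, KMbound s A.
Proof.
elim: D => [|d IH] // _ m s.
case: d IH s => [|d] IH s; first by exists m; exact: KM_base.
have : forall i : 'I_d.+2, exists Ai, KMbound (fun l => s (lift i l)) Ai.
  by move=> i; apply: IH.
case/fin_all_exists => Ai hAi.
pose Aprj := (\sum_i Ai i).+1.
have hprj : forall i, KMbound (fun l => s (lift i l)) Aprj.
  move=> i; apply: KMbound_mono (hAi i).
  by rewrite /Aprj ltnW // ltnS (bigD1 i) //= leq_addr.
pose bb := ((d.+2 * m.-1) ^ d.+2).+1.
pose E := bb.+1 ^ d.+2 * (d.+2 * (bb.+1 ^ m * Aprj)).
have E1 : 0 < E by rewrite /E /Aprj muln_gt0 expn_gt0 muln_gt0 muln_gt0 expn_gt0.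
have Q : forall t (S : {set gridpt d.+2 (bb.+1 ^ t)}), ~ contains S s ->
    #|S| <= E * (bb.+1 ^ t) ^ d.+1.
  elim=> [|t IHt] S hS.
    rewrite exp1n muln1; apply: leq_trans (max_card _) _.
    by rewrite card_ffun !card_ord exp1n.
  move: S hS; rewrite expnS => S hS.
  have := @step_bound d.+1 m bb (bb.+1 ^ t) s S E Aprj hprj (IHt) hS.
  move/leq_trans; apply.
  set M := bb.+1 ^ t.
  have -> : M * (bb.+1 ^ m * (Aprj * M ^ d.+1.-1)) = bb.+1 ^ m * Aprj * M ^ d.+1.
    by rewrite /= expnS !mulnA; congr (_ * _); rewrite [RHS]mulnC mulnA.
  have -> : bb.+1 ^ d.+2 * (d.+2 * (bb.+1 ^ m * Aprj * M ^ d.+1)) = E * M ^ d.+1.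
    by rewrite /E !mulnA.
  have hb : ((d.+2 * m.-1) ^ d.+2).+1 <= bb.+1 ^ d.+1.
    apply: leq_trans (_ : bb.+1 <= _); first by rewrite /bb ltnW.
    by rewrite -{1}(expn1 bb.+1) leq_pexp2l.
  rewrite [(bb.+1 * M) ^ _]expnMn.
  move: hb; set X := (d.+2 * m.-1) ^ d.+2; set P := M ^ d.+1; set Y := bb.+1 ^ d.+1.
  move=> hb; rewrite (_ : X * (E * P) + E * P = X.+1 * (E * P)); last by rewrite mulSn addnC.
  by rewrite mulnCA; apply: leq_mul => //; apply: leq_mul.
exists (E * bb.+1 ^ d.+1) => N S hS /=.
case: N S hS => [|N] S hS.
  apply: leq_trans (max_card _) _; by rewrite card_ffun !card_ord exp0n.
have b1 : 1 < bb.+1 by [].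
pose t := (trunc_log bb.+1 N.+1).+1.
have h1 : N.+1 <= bb.+1 ^ t by apply: ltnW; apply: trunc_log_ltn.
apply: leq_trans (embed_bound h1 (Q t) hS) _.
rewrite -mulnA leq_mul2l -expnMn leq_exp2r // orbC; apply/orP; left.
by rewrite /t expnS leq_mul2l trunc_logP.
Qed.

Definition stdv (D : nat) (l : 'I_D) (j : nat) : nat :=
  if j < D then (if j == l then 2 else 0)
  else if j < D.*2 then (if j - D == l then 1 else 3) else 0.

Definition stdp D : 'I_D -> 'I_(D.*2.+4) -> 'I_(D.*2.+4) :=
  fun l j => inord (stdv l j).

Lemma stdv_le3 D l j : @stdv D l j <= 3.
Proof. by rewrite /stdv; do !case: ifP. Qed.

Lemma stdp_val D l j : (stdp l j : nat) = @stdv D l j.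
Proof. by rewrite /stdp inordK // ltnS (leq_trans (stdv_le3 l j)). Qed.

Section Std.
Variable D : nat.
Lemma ia_lt (i : 'I_D) : i < D.*2.+4.
Proof. have := ltn_ord i; rewrite -addnn; lia. Qed.
Lemma ib_lt (i : 'I_D) : D + i < D.*2.+4.
Proof. have := ltn_ord i; rewrite -addnn; lia. Qed.
Definition ia (i : 'I_D) : 'I_(D.*2.+4) := Ordinal (ia_lt i).
Definition ib (i : 'I_D) : 'I_(D.*2.+4) := Ordinal (ib_lt i).

Lemma stdp_a l i : (stdp l (ia i) : nat) = if i == l then 2 else 0.
Proof. by rewrite stdp_val /stdv /= ltn_ord. Qed.
Lemma stdp_b l i : (stdp l (ib i) : nat) = if i == l then 1 else 3.
Proof.
rewrite stdp_val /stdv /= ltnNge leq_addr /= -addnn ltn_add2l ltn_ord addKn.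
by [].
Qed.
End Std.

Theorem mainTheorem4 :
  forall d : nat, (0 < d)%N ->
  exists C : nat,
    forall n : nat, (0 < n)%N ->
    forall S : {set gridpt d.+1 n},
      dim_le S d -> (#|S| <= C * n ^ d)%N.
Proof.
move=> d d0.
have [A hA] := KM (ltn0Sn d) (stdp (D := d.+1)).
exists A => n n0 S hS; apply: hA => -[phi [hin hmono]].
case: hS => d' [hd' [Ls [hlin hiff]]].
pose a i := phi (ia i); pose b i := phi (ib i).
have hab : forall i j, i != j -> grid_le (a i) (b j).
  move=> i j hij; apply/forallP => l; apply: ltnW; apply: hmono.
  rewrite stdp_a stdp_b; case: (eqVneq i l) => [eil|hil]; last by case: (j == l).
  by case: (eqVneq j l) => // ejl; move: hij; rewrite eil ejl eqxx.
have hnab : forall i, ~~ grid_le (a i) (b i).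
  move=> i; apply/negP => /forallP hi; have := hi i; rewrite leqNgt => /negP; apply.
  by apply: hmono; rewrite stdp_a stdp_b !eqxx.
have : forall i, exists j, Ls j (b i) (a i).
  move=> i; have : ~~ [forall j, Ls j (a i) (b i)].
    apply/negP => /forallP h; move/negP: (hnab i); apply.
    by apply/(proj2 (hiff _ _ (hin _) (hin _))).
  case/forallPn => j hj; exists j.
  case: (hlin j) => _ _ _ htot _.
  by move: (htot (a i) (b i) (hin _) (hin _)); rewrite (negbTE hj).
case/fin_all_exists => g hg.
have ginj : injective g.
  move=> i1 i2 e; case: (eqVneq i1 i2) => // hne; exfalso.
  case: (hlin (g i1)) => _ hanti htr _ hext.
  have h1 := hg i1; have h2 := hg i2; rewrite -e in h2.
  have l12 := hext _ _ (hin _) (hin _) (hab _ _ hne).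
  have hne' : i2 != i1 by rewrite eq_sym.
  have l21 := hext _ _ (hin _) (hin _) (hab i2 i1 hne').
  have bb12 := htr _ _ _ (hin _) (hin _) (hin _) h1 l12.
  have bb21 := htr _ _ _ (hin _) (hin _) (hin _) h2 l21.
  have eb := hanti _ _ (hin _) (hin _) bb12 bb21.
  rewrite /b -eb -/(b i1) in l12.
  have ea := hanti _ _ (hin _) (hin _) l12 h1.
  move/negP: (hnab i1); apply; rewrite /a ea; apply/forallP => k; exact: leqnn.
have := leq_card g ginj; rewrite !card_ord => hD.
by move: (leq_trans hD hd'); rewrite ltnn.
Qed.
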